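(* Let $(X,d)$ be a metric space, $\mu$ a non-atomic Borel measure on $X$, $\beta>0$, and let $\Gamma^*\subset\Gamma^\mu$ be a family of paths closed under taking non-trivial subpaths that has the $\mu$-arc-chord property with exponent $\beta$. Let $f:X\to\mathbb R$ be continuous and $g:X\to[0,\infty]$ measurable with $|f(x)-f(y)|\le d(x,y)^\beta(g(x)+g(y))$ for all $x,y\in X$. Then there is $C>0$ such that $Cg$ is an upper gradient of $f$.
   Context: A path is a continuous map $\gamma:[a,b]\to X$; a subpath is a restriction to a subinterval, trivial if that interval is a point; $\mathrm{Im}(\gamma)=\gamma([a,b])$. $\mu$ non-atomic: $\mu(\{x\})=0$ for all $x$. $\Gamma^\mu$ is the set of all non-trivial injective paths $\gamma$ with $0<\mu(\mathrm{Im}(\tilde\gamma))<\infty$ for every non-trivial subpath $\tilde\gamma$. For Borel $g\ge0$, $\int_\gamma g:=\int_{\mathrm{Im}(\gamma)}g\,d\mu$. $\mu$-arc-chord property with exponent $\beta$: there is $C_\mu>0$ with $\mathrm{diam}(\mathrm{Im}(\gamma))^\beta\le C_\mu\,\mu(\mathrm{Im}(\gamma))$ for all $\gamma\in\Gamma^*$. A nonnegative function $\rho$ is an upper gradient of $f$ if $|f(x)-f(y)|\le\int_\gamma\rho$ for every $\gamma\in\Gamma^*$ with endpoints $x,y$. *)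

(* Defs.v *)
From HB Require Import structures.
From mathcomp Require Import all_boot all_order all_algebra.
From mathcomp Require Import all_classical all_reals all_analysis.
From mathcomp Require Import measurable_realfun.
Set Implicit Arguments. Unset Strict Implicit. Unset Printing Implicit Defensive.
Import Order.TTheory GRing.Theory Num.Theory.
Import numFieldNormedType.Exports.
Local Open Scope classical_set_scope.
Local Open Scope ring_scope.

Section Defs.
Variables (R : realType) (X : metricType R).

(* X equipped with a chosen point x0 (MathComp-Analysis measurable types must
   be pointed); the point plays no other role. *)
Definition ptd (x0 : X) : Type := X.
HB.instance Definition _ (x0 : X) := Choice.on (ptd x0).
HB.instance Definition _ (x0 : X) := isPointed.Build (ptd x0) x0.

Definition borel (x0 : X) : measurableType _ :=
  g_sigma_algebraType (@open X : set (set (ptd x0))).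

(* A (candidate) gpath: parameter interval [pa, pb] and map pf (only its
   restriction to [pa, pb] matters). *)
Record gpath := GPath { pa : R; pb : R; pf : R -> X }.

Definition is_path (p : gpath) : Prop :=
  pa p <= pb p /\ {within `[pa p, pb p], continuous (pf p)}.

Definition nontrivial (p : gpath) : Prop := pa p < pb p.

Definition path_injective (p : gpath) : Prop :=
  forall s t, pa p <= s <= pb p -> pa p <= t <= pb p -> pf p s = pf p t -> s = t.

Definition Im (p : gpath) : set X := pf p @` `[pa p, pb p].

Definition subpath (p : gpath) (c e : R) : gpath := GPath c e (pf p).

Definition is_subinterval (p : gpath) (c e : R) : Prop :=
  pa p <= c /\ c <= e /\ e <= pb p.

Definition Gamma_mu (x0 : X) (mu : {measure set (borel x0) -> \bar R}) : set gpath :=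
  [set p | is_path p /\ nontrivial p /\ path_injective p /\
     forall c e, is_subinterval p c e -> c < e ->
       (0 < mu (Im (subpath p c e)))%E /\ (mu (Im (subpath p c e)) < +oo)%E].

Definition subpath_closed (G : set gpath) : Prop :=
  forall p c e, G p -> is_subinterval p c e -> c < e -> G (subpath p c e).

Definition non_atomic (x0 : X) (mu : {measure set (borel x0) -> \bar R}) : Prop :=
  forall x : X, mu [set x] = 0%E.

Definition diam (A : set X) : R := sup [set mdist x y | x in A & y in A].

Definition arc_chord (x0 : X) (mu : {measure set (borel x0) -> \bar R}) (G : set gpath)
  (beta : R) : Prop :=
  exists2 Cmu : R, 0 < Cmu &
    forall p, G p -> (((diam (Im p)) `^ beta)%:E <= Cmu%:E * mu (Im p))%E.

(* line integral of g along p w.r.t. mu: integral over the image *)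
Definition path_integral (x0 : X) (mu : {measure set (borel x0) -> \bar R}) (p : gpath)
  (g : X -> \bar R) : \bar R :=
  (\int[mu]_(x in (Im p : set (borel x0))) g x)%E.

Definition upper_gradient (x0 : X) (mu : {measure set (borel x0) -> \bar R}) (G : set gpath)
  (f : X -> R) (rho : X -> \bar R) : Prop :=
  (forall x, (0 <= rho x)%E) /\
  forall p, G p ->
    (`|f (pf p (pa p)) - f (pf p (pb p))|%:E <= path_integral mu p rho)%E.

End Defs.

(* Main.v *)
Require Import Defs.
From HB Require Import structures.
From mathcomp Require Import all_boot all_order all_algebra.
From mathcomp Require Import all_classical all_reals all_analysis.
From mathcomp Require Import measurable_realfun.
From mathcomp Require Import ring lra.
Import Order.TTheory GRing.Theory Num.Theory.
Import numFieldNormedType.Exports.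
Local Open Scope classical_set_scope.
Local Open Scope ring_scope.
Ltac is_arith T := lazymatch T with
  | is_true (_ <= _) => idtac
  | is_true (_ < _) => idtac
  | is_true (_ <= _ <= _) => idtac
  | is_true (_ < _ <= _) => idtac
  | @eq _ _ _ => idtac
  end.
Ltac clean := repeat match goal with
  | H : ?T |- _ => let S := type of T in
      lazymatch S with Prop => tryif is_arith T then fail else clear H end
  end.
Ltac flra := clean; lra.

Lemma within_ed {R : realType} {X : metricType R} {h : R -> X} {a b : R} :
  {within `[a, b], continuous h} ->
  forall t, a <= t <= b -> forall e, 0 < e -> exists2 d, 0 < d &
    forall s, a <= s <= b -> `|s - t| < d -> mdist (h t) (h s) < e.
Proof.
move=> hc t tab e e0.
have := (proj1 (subspace_continuousP _ _) hc t).
rewrite /= in_itv /= tab => /(_ isT).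
move/metricType_numDomainType.cvgrPdist_lt => /(_ e e0).
rewrite near_withinE /= => /nbhs_ballP [d /= d0 Hd].
exists d => // s sab st; apply: Hd; last by rewrite in_itv /= sab.
by rewrite /ball /= distrC.
Qed.

Lemma ed_within {R : realType} {X : metricType R} {h : R -> X} {a b : R} :
  (forall t, a <= t <= b -> forall e, 0 < e -> exists2 d, 0 < d &
    forall s, a <= s <= b -> `|s - t| < d -> mdist (h t) (h s) < e) ->
  {within `[a, b], continuous h}.
Proof.
move=> H; apply/subspace_continuousP => t; rewrite /= in_itv /= => tab.
apply/metricType_numDomainType.cvgrPdist_lt => e e0.
have [d d0 Hd] := H t tab e e0.
rewrite near_withinE /=; apply/nbhs_ballP; exists d => //= s.
rewrite /ball /= in_itv /= => st sab; apply: Hd => //; by rewrite distrC.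
Qed.

Lemma ed_withinR {R : realType} {h : R -> R} {a b : R} :
  (forall t, a <= t <= b -> forall e, 0 < e -> exists2 d, 0 < d &
    forall s, a <= s <= b -> `|s - t| < d -> `|h t - h s| < e) ->
  {within `[a, b], continuous h}.
Proof.
move=> H; apply/subspace_continuousP => t; rewrite /= in_itv /= => tab.
apply/cvgrPdist_lt => e e0.
have [d d0 Hd] := H t tab e e0.
rewrite near_withinE /=; apply/nbhs_ballP; exists d => //= s.
rewrite /ball /= in_itv /= => st sab; apply: Hd => //; by rewrite distrC.
Qed.
Lemma img_meas (R : realType) (X : metricType R) (x0 : X) (h : R -> X) (A : set R) :
  compact A -> {within A, continuous h} -> measurable (h @` A : set (borel x0)).
Proof.
move=> cA hc.
have cl := compact_closed (@metric_hausdorff _ X) (continuous_compact hc cA).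
rewrite -[_ @` _]setCK; apply: measurableC; apply: sub_sigma_algebra.
exact: closed_openC.
Qed.

Lemma seg_meas (R : realType) (X : metricType R) (x0 : X) (h : R -> X) (c e : R) :
  {within `[c, e], continuous h} -> measurable (h @` `[c, e] : set (borel x0)).
Proof. by move=> hc; apply: img_meas => //; exact: segment_compact. Qed.

Lemma diam_ub (R : realType) (X : metricType R) (h : R -> X) (c e : R) :
  c <= e -> {within `[c, e], continuous h} ->
  forall u v, (h @` `[c, e]) u -> (h @` `[c, e]) v -> mdist u v <= diam (h @` `[c, e]).
Proof.
move=> ce hc u v hu hv.
pose phi t := mdist (h c) (h t).
have pc : {within `[c, e], continuous phi}.
  apply: ed_withinR => t tce eps eps0.
  have [d d0 Hd] := within_ed hc t tce eps eps0.
  exists d => // s sce ts; apply: le_lt_trans (Hd s sce ts).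
  rewrite /phi ler_distlC; apply/andP; split.
    by rewrite lerBlDr (metric_sym (h t)); exact: metric_triangle.
  exact: metric_triangle.
have [tm tmce Htm] := EVT_max ce pc.
apply: ub_le_sup.
  exists (phi tm + phi tm) => _ [x1 [s1 s1ce <-] [y1 [s2 s2ce <-] <-]].
  rewrite (le_trans (metric_triangle _ (h c) _)) //.
  by rewrite metric_sym lerD // Htm.
by exists u => //; exists v.
Qed.

Lemma mle {R : realType} {X : metricType R} {x0 : X}
  (mu : {measure set (borel x0) -> \bar R}) (A B : set (borel x0)) :
  measurable A -> measurable B -> A `<=` B -> (mu A <= mu B)%E.
Proof. by move=> mA mB AB; apply: le_measure => //; rewrite inE. Qed.

Lemma inv_small {R : realType} {d : R} : 0 < d -> exists n : nat, (n.+1%:R)^-1 < d.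
Proof.
move=> d0; exists (Num.truncn d^-1).
rewrite -[X in _ < X]invrK ltf_pV2 ?posrE ?invr_gt0 //; exact: truncnS_gt.
Qed.

Lemma set1_meas {R : realType} {X : metricType R} (x0 : X) (h : R -> X) (a b s : R) :
  {within `[a, b], continuous h} -> a <= s <= b -> measurable ([set h s] : set (borel x0)).
Proof.
move=> hc sab; rewrite -image_set1 -set_itv1; apply: seg_meas.
apply: continuous_subspaceW hc => r /=; rewrite !in_itv /= => /andP[r1 r2].
case/andP: sab => s1 s2; apply/andP; split; [exact: le_trans r1|exact: le_trans s2].
Qed.

Lemma shrink {R : realType} {X : metricType R} {x0 : X}
  (mu : {measure set (borel x0) -> \bar R}) (h : R -> X) (a b s : R) :
  non_atomic mu -> {within `[a, b], continuous h} ->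
  (mu (h @` `[a, b] : set (borel x0)) < +oo)%E -> a <= s <= b ->
  forall e, 0 < e -> exists2 r, 0 < r &
    (mu (h @` (`[a, b] `&` `[(s - r)%R, (s + r)%R]) : set (borel x0)) <= e%:E)%E.
Proof.
move=> na hc fin sab e e0.
pose F n : set (borel x0) :=
  h @` (`[a, b] `&` `[s - (n.+1%:R)^-1, s + (n.+1%:R)^-1]).
have cI r : compact (`[a, b] `&` `[s - r, s + r]).
  apply: compact_closedI; first exact: segment_compact.
  exact: interval_closed.
have mF n : measurable (F n).
  apply: img_meas; first exact: cI.
  exact: continuous_subspaceW hc.
have mI : measurable (\bigcap_n F n) by exact: bigcapT_measurable.
have F0 : (mu (F 0%N) < +oo)%E.
  apply: le_lt_trans fin; apply: mle => //; first exact: seg_meas.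
  by move=> _ [r [rab _] <-]; exists r.
have nF : nonincreasing_seq F.
  move=> n m nm; rewrite subsetEset => _ [r [rab rs] <-]; exists r => //.
  split => //; move: rs => /=; rewrite !in_itv /= => /andP[r1 r2].
  have le : (m.+1%:R : R)^-1 <= (n.+1%:R)^-1.
    by rewrite lef_pV2 ?posrE // ler_nat.
  apply/andP; split.
    by apply: le_trans r1; rewrite lerD2l lerN2.
  by apply: le_trans r2 _; rewrite lerD2l.
have I0 : mu (\bigcap_n F n) = 0%E.
  apply/eqP; rewrite eq_le measure_ge0 andbT -(na (h s)).
  apply: mle => //; first exact: set1_meas hc sab.
  move=> y Fy; apply/mdist_positivity/eqP; rewrite eq_le mdist_ge0 andbT.
  apply/ler_addgt0Pr => eps eps0; rewrite add0r; apply: ltW.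
  have [d d0 Hd] := within_ed hc s sab eps eps0.
  have [n nd] := inv_small d0.
  have [r [rab rs] <-] : F n y by exact: Fy.
  rewrite metric_sym; apply: Hd; first by move: rab => /=; rewrite in_itv.
  move: rs => /=; rewrite in_itv /= => /andP[r1 r2].
  apply: le_lt_trans nd; rewrite ler_distlC; apply/andP; split; [by rewrite lerBlDr | by rewrite -lerBlDr].
have := nonincreasing_cvg_mu F0 mF mI nF.
rewrite I0 => /fine_cvgP [finF /cvgrPdist_le /(_ e e0)] [N _ HN].
exists (N.+1%:R)^-1; first by rewrite invr_gt0.
have := HN N (leqnn N); rewrite /= sub0r normrN.
have : (mu (F N) \is a fin_num)%E.
  rewrite ge0_fin_numE ?measure_ge0 // (le_lt_trans _ F0) // mle // -subsetEset; exact: nF.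
move=> /fineK <- /(le_trans (ler_norm _)); rewrite lee_fin; exact.
Qed.

Lemma segI_meas {R : realType} {X : metricType R} (x0 : X) (h : R -> X) (a b c d : R) :
  {within `[a, b], continuous h} ->
  measurable (h @` (`[a, b] `&` `[c, d]) : set (borel x0)).
Proof.
move=> hc; apply: img_meas; last exact: continuous_subspaceW hc.
apply: compact_closedI; first exact: segment_compact.
exact: interval_closed.
Qed.

Lemma family_left {R : realType} {X : metricType R} {x0 : X}
  (mu : {measure set (borel x0) -> \bar R}) (h : R -> X) (a b : R) (f : X -> R) :
  non_atomic mu -> a < b -> {within `[a, b], continuous h} ->
  (mu (h @` `[a, b] : set (borel x0)) < +oo)%E -> continuous f ->
  [/\ (forall t, 0 <= t <= b - a -> measurable (h @` `[a, a + t] : set (borel x0))),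
     (forall s t, s <= t -> h @` `[a, a + s] `<=` h @` `[a, a + t]),
     (forall c, 0 < c <= fine (mu (h @` `[a, a + (b - a)] : set (borel x0))) ->
        exists t, 0 < t <= b - a /\ mu (h @` `[a, a + t] : set (borel x0)) = c%:E) &
     (forall e, 0 < e -> exists t, 0 < t <= b - a /\
        forall u, (h @` `[a, a + t]) u -> `|f (h a) - f u| <= e)].
Proof.
move=> na ab hc fin fc.
have sub t : 0 <= t <= b - a -> `[a, a + t] `<=` `[a, b].
  move=> /andP[t0 tL] r /=; rewrite !in_itv /= => /andP[r1 r2].
  by rewrite r1 /=; apply: (le_trans r2); flra.
have cJ t : 0 <= t <= b - a -> {within `[a, a + t], continuous h}.
  by move=> tL; apply: continuous_subspaceW hc; exact: sub.
have mJ t : 0 <= t <= b - a -> measurable (h @` `[a, a + t] : set (borel x0)).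
  by move=> tL; apply: seg_meas; exact: cJ.
have mono s t : s <= t -> h @` `[a, a + s] `<=` h @` `[a, a + t].
  move=> st _ [r rs <-]; exists r => //; move: rs => /=; rewrite !in_itv /=.
  by move=> /andP[r1 r2]; rewrite r1 /=; apply: (le_trans r2); flra.
have mab : measurable (h @` `[a, b] : set (borel x0)) by exact: seg_meas.
have finJ t : 0 <= t <= b - a ->
    mu (h @` `[a, a + t] : set (borel x0)) \is a fin_num.
  move=> tL; rewrite ge0_fin_numE ?measure_ge0 //; apply: le_lt_trans fin.
  by apply: mle => //; [exact: mJ | exact: image_subset (sub _ tL)].
pose m t := fine (mu (h @` `[a, a + t] : set (borel x0))).
have mE t : 0 <= t <= b - a -> mu (h @` `[a, a + t] : set (borel x0)) = (m t)%:E.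
  by move=> tL; rewrite fineK //; exact: finJ.
split => //.
-
  move=> c /andP[c0 cM].
  have L0 : 0 <= b - a by flra.
  have m0 : m 0 = 0 by rewrite /m addr0 set_itv1 image_set1 na.
  have mmono u v : 0 <= u -> u <= v -> v <= b - a -> m u <= m v.
    move=> u0 uv vL; rewrite -lee_fin -!mE; try (apply/andP; split; flra).
    by apply: mle; [apply: mJ; apply/andP; split; flra|apply: mJ; apply/andP; split; flra|exact: mono].
  have cont : {within `[0, b - a], continuous m}.
    apply: ed_withinR => t /andP[t0 tL] eps eps0.
    have sab : a <= a + t <= b by apply/andP; split; flra.
    have [r r0 Hr] := shrink _ _ _ _ _ na hc fin sab (eps / 2) (divr_gt0 eps0 (ltr0Sn _ 1)).
    set K := h @` (`[a, b] `&` `[(a + t - r)%R, (a + t + r)%R]) in Hr.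
    have mK : measurable (K : set (borel x0)) by exact: segI_meas.
    have finK : mu (K : set (borel x0)) \is a fin_num.
      by rewrite ge0_fin_numE ?measure_ge0 // (le_lt_trans Hr) // ltry.
    have kK : fine (mu (K : set (borel x0))) <= eps / 2.
      by rewrite -lee_fin fineK.
    have key u v : 0 <= u -> u <= v -> v <= b - a ->
        a + t - r <= a + u -> a + v <= a + t + r ->
        m v <= m u + fine (mu (K : set (borel x0))).
      move=> u0 uv vL ur vr.
      rewrite -lee_fin EFinD (fineK finK) -!mE; try (apply/andP; split; flra).
      apply: le_trans (measureU2 _ _ _); last exact: mK.
        apply: mle; [apply: mJ; apply/andP; split; flra| |].
          by apply: measurableU => //; apply: mJ; apply/andP; split; flra.
        move=> _ [w wv <-]; move: wv => /=; rewrite in_itv /= => /andP[w1 w2].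
        case: (leP w (a + u)) => wu; [left | right]; exists w => //=.
          by rewrite in_itv /= w1.
        split; rewrite /= in_itv /=; apply/andP; split; flra.
      by apply: mJ; apply/andP; split; flra.
    exists r => // t' /andP[t'0 t'L] tt'.
    move: tt'; rewrite ltr_norml => /andP[tt1 tt2].
    apply: (le_lt_trans _ (_ : eps / 2 < eps)); last by rewrite ltr_pdivrMr // ltr_pMr // ltr1n.
    apply: le_trans kK.
    case: (leP t t') => tt.
      have h1 := mmono t t' t0 tt t'L.
      have h2 := key t t' t0 tt t'L ltac:(flra) ltac:(flra).
      rewrite ler_norml; apply/andP; split; flra.
    have h1 := mmono t' t t'0 (ltW tt) tL.
    have h2 := key t' t t'0 (ltW tt) tL ltac:(flra) ltac:(flra).
    rewrite ler_norml; apply/andP; split; flra.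
  have [|t tL mt] := @IVT _ m 0 (b - a) c L0 cont.
    have cM2 : c <= m (b - a) := cM.
    have mL0 : 0 <= m (b - a) by apply: le_trans cM2; exact: ltW.
    by rewrite m0 (min_idPl mL0) (max_idPr mL0) cM2 (ltW c0).
  move: tL; rewrite in_itv /= => /andP[t0 tL].
  exists t; split; last by rewrite mE ?mt // t0 tL.
  rewrite tL andbT lt_neqAle t0 andbT; apply/eqP => t0'.
  by move: mt; rewrite -t0' m0 => c0'; rewrite c0' ltxx in c0.
-
  move=> e e0.
  have := fc (h a); move/cvgrPdist_le => /(_ e e0) /nbhs_ballP [rho /= rho0 Hrho].
  have aab : a <= a <= b by rewrite lexx (ltW ab).
  have [d d0 Hd] := within_ed hc a aab rho rho0.
  have d20 : 0 < d / 2 by rewrite divr_gt0.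
  have ba0 : 0 < b - a by flra.
  exists (Num.min (d / 2) (b - a)); split.
    by rewrite lt_min d20 ba0 /= ge_min lexx orbT.
  move=> _ [w wt <-]; apply: Hrho; rewrite ballEmdist /=.
  have hm1 : Num.min (d / 2) (b - a) <= d / 2 by rewrite ge_min lexx.
  have hm2 : Num.min (d / 2) (b - a) <= b - a by rewrite ge_min lexx orbT.
  move: wt => /=; rewrite in_itv /= => /andP[w1 w2].
  apply: Hd; first by apply/andP; split; flra.
  rewrite ger0_norm; flra.
Qed.

Lemma avg {R : realType} {X : metricType R} {x0 : X}
  (mu : {measure set (borel x0) -> \bar R}) (S : set (borel x0)) (g : X -> \bar R) :
  measurable S -> (0 < mu S)%E -> (mu S < +oo)%E -> (forall u, 0 <= g u)%E ->
  measurable_fun setT (g : borel x0 -> \bar R) ->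
  (\int[mu]_(u in S) g u < +oo)%E ->
  forall eta, 0 < eta -> exists z, S z /\
    (g z <= (fine (\int[mu]_(u in S) g u) / fine (mu S) + eta)%:E)%E.
Proof.
move=> mS S0 Soo g0 mg Ioo eta eta0.
set I := fine _; set m := fine (mu S).
have mE : mu S = m%:E by rewrite fineK // ge0_fin_numE ?measure_ge0.
have IE : (\int[mu]_(u in S) g u = I%:E)%E.
  by rewrite fineK // ge0_fin_numE ?integral_ge0.
have m0 : 0 < m by rewrite -lte_fin -mE.
have I0 : 0 <= I by rewrite -lee_fin -IE integral_ge0.
case: (pselect (exists z, S z /\ (g z <= (I / m + eta)%:E)%E)) => // H.
exfalso.
have Hz z : S z -> ((I / m + eta)%:E <= g z)%E.
  move=> Sz; rewrite leNgt; apply/negP => hlt; apply: H; exists z; split => //.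
  exact: ltW.
have : (\int[mu]_(u in S) (cst (I / m + eta)%:E) u <= \int[mu]_(u in S) g u)%E.
  apply: ge0_le_integral => //.
  - move=> u _; rewrite lee_fin /=; apply: addr_ge0; last exact: ltW.
    by apply: divr_ge0 => //; exact: ltW.
  - exact: measurable_funS mg.
rewrite integral_cst // IE mE -EFinM lee_fin mulrDl divfK ?gt_eqF //.
by rewrite gerDl leNgt mulr_gt0.
Qed.

Lemma mD {R : realType} {X : metricType R} {x0 : X}
  (mu : {measure set (borel x0) -> \bar R}) (A B : set (borel x0)) :
  measurable A -> measurable B -> B `<=` A -> (mu A < +oo)%E ->
  mu (A `\` B) = (mu A - mu B)%E.
Proof. by move=> mA mB BA fA; rewrite measureD // setIidr. Qed.

Lemma chain {R : realType} {X : metricType R} {x0 : X}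
  (mu : {measure set (borel x0) -> \bar R}) (J : R -> set (borel x0)) (L Cm : R)
  (x : X) (f : X -> R) (g : X -> \bar R) :
  0 < L -> 0 < Cm ->
  (forall t, 0 < t <= L -> measurable (J t)) ->
  (forall t, 0 < t <= L -> (0 < mu (J t))%E) ->
  (mu (J L) < +oo)%E ->
  (forall s t, 0 < s -> s <= t -> t <= L -> J s `<=` J t) ->
  (forall c, 0 < c <= fine (mu (J L)) -> exists t, 0 < t <= L /\ mu (J t) = c%:E) ->
  (forall t u v, 0 < t <= L -> J t u -> J t v ->
     (`|f u - f v|%:E <= (Cm%:E * mu (J t)) * (g u + g v))%E) ->
  (forall e, 0 < e -> exists t, 0 < t <= L /\ forall u, J t u -> `|f x - f u| <= e) ->
  (forall u, (0 <= g u)%E) -> measurable_fun setT (g : borel x0 -> \bar R) ->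
  (\int[mu]_(u in J L) g u < +oo)%E ->
  forall e, 0 < e -> exists z, [/\ J L z, g z = (fine (g z))%:E,
     fine (g z) * fine (mu (J L)) <= 2 * fine (\int[mu]_(u in J L) g u) + e &
     `|f x - f z| <= 6 * Cm * fine (\int[mu]_(u in J L) g u) + e].
Proof.
move=> L0 Cm0 mJ posJ finL monJ ivt link close g0 mg finI e e0.
have LL : 0 < L <= L by rewrite L0 lexx.
have JLsub t : 0 < t <= L -> J t `<=` J L.
  by move=> /andP[t0 tL]; apply: monJ.
have finJ t : 0 < t <= L -> mu (J t) \is a fin_num.
  move=> tL; rewrite ge0_fin_numE ?measure_ge0 //; apply: le_lt_trans finL.
  by apply: mle; [exact: mJ|exact: mJ|exact: JLsub].
have IJle t : 0 < t <= L -> (\int[mu]_(u in J t) g u <= \int[mu]_(u in J L) g u)%E.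
  move=> tL; apply: ge0_subset_integral; [exact: mJ|exact: mJ| |by []|exact: JLsub].
  exact: measurable_funS mg.
have finIJ t : 0 < t <= L -> (\int[mu]_(u in J t) g u)%E \is a fin_num.
  move=> tL; rewrite ge0_fin_numE ?integral_ge0 //; exact: le_lt_trans (IJle t tL) finI.
set M := fine (mu (J L)).
have ME : mu (J L) = M%:E by rewrite fineK //; exact: finJ.
have M0 : 0 < M by rewrite -lte_fin -ME; exact: posJ.
set I := fine (\int[mu]_(u in J L) g u).
have IE : (\int[mu]_(u in J L) g u = I%:E)%E by rewrite fineK //; exact: finIJ.
have I0 : 0 <= I by rewrite -lee_fin -IE integral_ge0.
pose w n := M / 2 ^+ n.
have w0 n : 0 < w n by rewrite divr_gt0 // exprn_gt0.
have wS n : w n.+1 * 2 = w n by rewrite /w exprS; field; rewrite expf_neq0.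
have [a Ha] : exists a : nat -> R, forall n, 0 < a n <= L /\ mu (J (a n)) = (w n)%:E.
  suff H : forall n, exists t, 0 < t <= L /\ mu (J t) = (w n)%:E.
    by have [a' Ha'] := choice H; exists a'.
  move=> n; apply: ivt; rewrite w0 /= /w ler_pdivrMr ?exprn_gt0 //.
  by rewrite ler_peMr ?(ltW M0) // exprn_ege1 // ler1n.
have aP n : 0 < a n <= L := (Ha n).1.
have aE n : mu (J (a n)) = (w n)%:E := (Ha n).2.
have ord1 n : J (a n.+1) `<=` J (a n).
  case/andP: (aP n) => an0 anL; case/andP: (aP n.+1) => a10 a1L.
  apply: (monJ _ _ a10 _ anL); rewrite leNgt; apply/negP => lt.
  have := mle mu _ _ (mJ _ (aP n)) (mJ _ (aP n.+1)) (monJ _ _ an0 (ltW lt) a1L).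
  rewrite !aE lee_fin -(wS n) => h; have := w0 n.+1; flra.
have ord n k : J (a (n + k)%N) `<=` J (a n).
  elim: k => [|k IH]; first by rewrite addn0.
  by rewrite addnS; apply: subset_trans (ord1 _) IH.
pose P n := J (a n) `\` J (a n.+1).
have mP n : measurable (P n) := measurableD (mJ _ (aP n)) (mJ _ (aP n.+1)).
have PE n : mu (P n) = (w n.+1)%:E.
  rewrite (mD mu _ _ (mJ _ (aP n)) (mJ _ (aP n.+1)) (ord1 n)); last by rewrite aE ltry.
  rewrite !aE -EFinB; congr EFin; rewrite -(wS n); ring.
pose Ir n := fine (\int[mu]_(u in J (a n)) g u).
have IrE n : (\int[mu]_(u in J (a n)) g u = (Ir n)%:E)%E by rewrite fineK //; exact: finIJ.
have IPE n : (\int[mu]_(u in P n) g u = (Ir n - Ir n.+1)%:E)%E.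
  have U : P n `|` J (a n.+1) = J (a n) by rewrite setUC setDUK // ord1.
  have := ge0_integral_setU mu (mP n) (mJ _ (aP n.+1)) (f := g) _ _ _.
  rewrite U IrE IrE EFinB => ->; [by rewrite addeK| | |].
  - exact: measurable_funS mg.
  - by [].
  - by rewrite disj_set2E setIC setDIK.
have Ir0 n : 0 <= Ir n by rewrite -lee_fin -IrE integral_ge0.
have Irle n : Ir n.+1 <= Ir n.
  by rewrite -subr_ge0 -lee_fin -IPE integral_ge0.
have Ir0I : Ir 0 <= I by rewrite -lee_fin -IrE -IE; exact: IJle.
set kap := e / (2 * (4 * Cm + 1)).
have kap0 : 0 < kap by rewrite divr_gt0 // mulr_gt0 // addr_gt0 // mulr_gt0.
have hk : 8 * (Cm * kap) + 2 * kap = e.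
  rewrite /kap; field; apply/eqP => h; have : 0 < 4 * Cm + 1 by rewrite addr_gt0 // mulr_gt0.
  by rewrite h ltxx.
set eta := kap / M.
have eta0 : 0 < eta by rewrite divr_gt0.
have etaM : eta * w 0 = kap by rewrite /w expr0 divr1 /eta divfK // gt_eqF.
have [z Hz] : exists z : nat -> X, forall n, P n (z n) /\
    (g (z n) <= ((Ir n - Ir n.+1) / w n.+1 + eta)%:E)%E.
  suff H : forall n, exists y, P n y /\
      (g y <= ((Ir n - Ir n.+1) / w n.+1 + eta)%:E)%E.
    by have [z' Hz'] := choice H; exists z'.
  move=> n; have := avg mu _ g (mP n) _ _ g0 mg _ eta eta0.
  rewrite IPE PE /=; apply; by rewrite ?lte_fin ?ltry.
pose G n := fine (g (z n)).
have gfin n : g (z n) = (G n)%:E.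
  rewrite fineK // ge0_fin_numE //; apply: le_lt_trans (Hz n).2 _; exact: ltry.
have Gb n : G n <= (Ir n - Ir n.+1) / w n.+1 + eta by rewrite -lee_fin -gfin; exact: (Hz n).2.
have G0 n : 0 <= G n by rewrite -lee_fin -gfin.
have zJ n : J (a n) (z n) by case: (Hz n) => -[].
have step n : `|f (z n) - f (z n.+1)| <=
    Cm * (2 * (Ir n - Ir n.+1) + 4 * (Ir n.+1 - Ir n.+2) + 2 * (eta * w n)).
  have := link (a n) (z n) (z n.+1) (aP n) (zJ n) (ord1 n _ (zJ n.+1)).
  rewrite aE !gfin -EFinD -!EFinM lee_fin => H; apply: le_trans H _.
  rewrite -mulrA ler_wpM2l ?(ltW Cm0) //.
  have k1 : w n * G n <= 2 * (Ir n - Ir n.+1) + eta * w n.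
    apply: le_trans (ler_wpM2l (ltW (w0 n)) (Gb n)) _.
    rewrite -(wS n); rewrite le_eqVlt; apply/orP; left; apply/eqP; field; exact: lt0r_neq0 (w0 _).
  have k2 : w n * G n.+1 <= 4 * (Ir n.+1 - Ir n.+2) + eta * w n.
    apply: le_trans (ler_wpM2l (ltW (w0 n)) (Gb n.+1)) _.
    rewrite -(wS n) -(wS n.+1); rewrite le_eqVlt; apply/orP; left; apply/eqP; field; exact: lt0r_neq0 (w0 _).
  rewrite mulrDr; flra.
have chainN N : `|f (z 0) - f (z N)| <=
    Cm * (2 * (Ir 0 - Ir N) + 4 * (Ir 1 - Ir N.+1) + 4 * (eta * w 0 - eta * w N)).
  elim: N => [|N IH]; first by rewrite !subrr normr0 !mulr0 !addr0 mulr0.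
  apply: le_trans (ler_distD (f (z N)) _ _) _.
  apply: le_trans (lerD IH (step N)) _.
  have hw : eta * w N = 2 * (eta * w N.+1) by rewrite -(wS N); ring.
  rewrite -mulrDr ler_wpM2l ?(ltW Cm0) //; flra.
have e20 : 0 < e / 2 by rewrite divr_gt0.
have [t [tL Ht]] := close (e / 2) e20.
set mt := fine (mu (J t)).
have mtE : mu (J t) = mt%:E by rewrite fineK //; exact: finJ.
have mt0 : 0 < mt by rewrite -lte_fin -mtE; exact: posJ.
set N := (Num.truncn (M / mt)).+1.
have wN : w N < mt.
  rewrite /w ltr_pdivrMr ?exprn_gt0 // mulrC -ltr_pdivrMr //.
  apply: lt_le_trans (truncnS_gt _) _.
  rewrite -natrX ler_nat; exact: ltnW (ltn_expl _ _).
have aNt : a N <= t.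
  rewrite leNgt; apply/negP => lt.
  case/andP: (tL) => t0 tL'; case/andP: (aP N) => aN0 aNL.
  have := mle mu _ _ (mJ _ tL) (mJ _ (aP N)) (monJ _ _ t0 (ltW lt) aNL).
  rewrite mtE aE lee_fin => h; flra.
have zNt : J t (z N).
  case/andP: (tL) => t0 tL'; case/andP: (aP N) => aN0 aNL.
  exact: (monJ _ _ aN0 aNt tL' _ (zJ N)).
have HN := Ht _ zNt.
have CN := chainN N.
exists (z 0); split.
- exact: JLsub (aP 0) _ (zJ 0).
- exact: gfin.
- have := Gb 0; rewrite -/(G 0).
  have w1 : w 1 = M / 2 by rewrite /w expr1.
  have kapM : eta * M = kap by rewrite /eta divfK // gt_eqF.
  move=> H; apply: le_trans (ler_wpM2r (ltW M0) H) _.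
  rewrite mulrDl kapM w1.
  have -> : (Ir 0 - Ir 1) / (M / 2) * M = 2 * (Ir 0 - Ir 1).
    by field; exact: lt0r_neq0.
  have := Ir0 1; have := Cm0; have := Irle 0.
  have := Ir0I; have := mulr_gt0 Cm0 kap0; flra.
- apply: le_trans (ler_distD (f (z N)) _ _) _.
  rewrite distrC in CN.
  have hCm : Cm * (2 * (Ir 0 - Ir N) + 4 * (Ir 1 - Ir N.+1) + 4 * (eta * w 0 - eta * w N))
      <= Cm * (6 * I + 4 * kap).
    rewrite ler_wpM2l ?(ltW Cm0) //.
    have := Ir0 N; have := Ir0 N.+1; have := Irle 0; have := mulr_gt0 eta0 (w0 N).
    rewrite etaM; flra.
  have := lerD HN (le_trans CN hCm).
  move=> H; apply: le_trans H _; rewrite mulrDr; flra.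
Qed.

Lemma img_rev {R : realType} {X : metricType R} (h : R -> X) (c d : R) :
  (fun t => h (- t)) @` `[(- d)%R, (- c)%R] = h @` `[c, d].
Proof.
apply/seteqP; split => _ [r rI <-].
  exists (- r) => //; move: rI => /=; rewrite !in_itv /= => /andP[r1 r2].
  by rewrite lerNr r2 lerNl r1.
exists (- r); last by rewrite opprK.
move: rI => /=; rewrite !in_itv /= => /andP[r1 r2].
by rewrite lerN2 r2 lerN2 r1.
Qed.

Lemma link_gen {R : realType} {X : metricType R} {x0 : X}
  (mu : {measure set (borel x0) -> \bar R}) (beta Cm : R)
  (Gam : set (@gpath R X)) (f : X -> R) (g : X -> \bar R) (p : @gpath R X) (c e : R) :
  0 < beta -> Gam `<=` Gamma_mu mu -> subpath_closed Gam ->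
  (forall p, Gam p -> (((diam (Defs.Im p)) `^ beta)%:E <= Cm%:E * mu (Defs.Im p))%E) ->
  (forall u, (0 <= g u)%E) ->
  (forall x y : X,
     (`|f x - f y|%:E <= ((mdist x y) `^ beta)%:E * (g x + g y))%E) ->
  Gam p -> pa p <= c -> c < e -> e <= pb p ->
  forall u v, (pf p @` `[c, e]) u -> (pf p @` `[c, e]) v ->
    (`|f u - f v|%:E <= (Cm%:E * mu (pf p @` `[c, e] : set (borel x0))) * (g u + g v))%E.
Proof.
move=> beta0 GamS subc ac g0 hfg Gp pc ce ep u v hu hv.
have Gs := subc p c e Gp (conj pc (conj (ltW ce) ep)) ce.
have := ac _ Gs; rewrite /Defs.Im /= => H.
have [[_ pcont] _] := GamS p Gp.
have hc : {within `[c, e], continuous pf p}.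
  apply: continuous_subspaceW pcont => r /=; rewrite !in_itv /= => /andP[r1 r2].
  by rewrite (le_trans pc r1) (le_trans r2 ep).
have dle := diam_ub _ _ _ _ _ (ltW ce) hc u v hu hv.
apply: le_trans (hfg u v) _; apply: lee_wpmul2r; first by rewrite adde_ge0.
apply: le_trans H; rewrite lee_fin; apply: ge0_ler_powR => //; first exact: ltW.
  by rewrite nnegrE mdist_ge0.
by rewrite nnegrE (le_trans (mdist_ge0 u v) dle).
Qed.

Theorem lemma5p5 (R : realType) (X : metricType R) (x0 : X)
  (mu : {measure set (borel x0) -> \bar R}) (beta : R)
  (Gam : set (@gpath R X)) (f : X -> R) (g : X -> \bar R) :
  non_atomic mu ->
  0 < beta ->
  Gam `<=` Gamma_mu mu ->
  subpath_closed Gam ->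
  arc_chord mu Gam beta ->
  continuous f ->
  (forall x, (0 <= g x)%E) ->
  measurable_fun setT (g : borel x0 -> \bar R) ->
  (forall x y : X,
     (`|f x - f y|%:E <= ((mdist x y) `^ beta)%:E * (g x + g y))%E) ->
  exists2 C : R, 0 < C & upper_gradient mu Gam f (fun x => (C%:E * g x)%E).
Proof.
move=> na beta0 GamS subc [Cm Cm0 ac] fc g0 mg hfg.
exists (16 * Cm); first by rewrite mulr_gt0.
split; first by move=> x; rewrite mule_ge0 // lee_fin mulr_ge0 // ltW.
move=> p Gp.
have [[_ pcont] [pnt [_ hsub]]] := GamS p Gp.
have Lk c e := link_gen mu beta Cm Gam f g p c e beta0 GamS subc ac g0 hfg Gp.
rewrite /path_integral /Defs.Im.
destruct p as [a b h]; simpl in *; rename pnt into ab.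
have mab : measurable (h @` `[a, b] : set (borel x0)) by exact: seg_meas.
have -> : (\int[mu]_(x in (h @` `[a, b] : set (borel x0))) ((16 * Cm)%:E * g x) =
    (16 * Cm)%:E * \int[mu]_(x in (h @` `[a, b] : set (borel x0))) g x)%E.
  apply: ge0_integralZl_EFin => //.
  - exact: measurable_funS mg.
  - by rewrite mulr_ge0 // ltW.
have C0 : 0 < 16 * Cm by rewrite mulr_gt0.
have [Iinf|Ifin] := eqVneq (\int[mu]_(x in (h @` `[a, b] : set (borel x0))) g x)%E +oo%E.
  by rewrite Iinf gt0_muley ?lte_fin // leey.
have finI : (\int[mu]_(x in (h @` `[a, b] : set (borel x0))) g x < +oo)%E.
  by rewrite lt_neqAle Ifin leey.
have sub1 c e : a <= c -> c <= e -> e <= b -> is_subinterval (GPath a b h) c e.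
  by move=> *; split => //; split.
have finM : (mu (h @` `[a, b] : set (borel x0)) < +oo)%E.
  by have [] := hsub a b (sub1 _ _ (lexx a) (ltW ab) (lexx b)) ab.
have L0 : 0 < b - a by rewrite subr_gt0.
have [mJl monl ivtl closel] := family_left mu h a b f na ab pcont finM fc.
have JL : a + (b - a) = b by rewrite addrC subrK.
rewrite JL in ivtl.
have l1 t : 0 < t <= b - a -> measurable (h @` `[a, a + t] : set (borel x0)).
  by case/andP => t0 tL; apply: mJl; rewrite (ltW t0).
have l2 t : 0 < t <= b - a -> (0 < mu (h @` `[a, (a + t)%R] : set (borel x0)))%E.
  case/andP => t0 tL; have at1 : a < a + t by flra.
  have at2 : a + t <= b by flra.
  by have [] := hsub a (a + t) (sub1 _ _ (lexx a) (ltW at1) at2) at1.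
have l4 s t : 0 < s -> s <= t -> t <= b - a -> h @` `[a, a + s] `<=` h @` `[a, a + t].
  by move=> *; exact: monl.
have l5 t u v : 0 < t <= b - a -> (h @` `[a, a + t]) u -> (h @` `[a, a + t]) v ->
    (`|f u - f v|%:E <= (Cm%:E * mu (h @` `[a, (a + t)%R] : set (borel x0))) * (g u + g v))%E.
  case/andP => t0 tL; apply: Lk; [exact: lexx|flra|flra].
have CL := chain mu (fun t => h @` `[a, a + t]) (b - a) Cm (h a) f g L0 Cm0 l1 l2.
rewrite JL in CL.
have {}CL := CL finM l4 ivtl l5 closel g0 mg finI.
pose h' := fun t => h (- t).
have ab' : - b < - a by rewrite ltrN2.
have pcont' : {within `[(- b)%R, (- a)%R], continuous h'}.
  apply: ed_within => t tI eps eps0.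
  have tI' : a <= - t <= b by case/andP: tI => t1 t2; apply/andP; split; flra.
  have [d d0 Hd] := within_ed pcont (- t) tI' eps eps0.
  exists d => // s sI st; apply: Hd.
    by case/andP: sI => s1 s2; apply/andP; split; flra.
  have -> : - s - - t = - (s - t) by ring.
  by rewrite normrN.
have finM' : (mu (h' @` `[(- b)%R, (- a)%R] : set (borel x0)) < +oo)%E.
  by rewrite img_rev.
have [mJr monr ivtr closer] := family_left mu h' (- b) (- a) f na ab' pcont' finM' fc.
have JrE t : h' @` `[(- b)%R, (- b + t)%R] = h @` `[(b - t)%R, b].
  have -> : - b + t = - (b - t) by ring.
  exact: img_rev.
have LE : - a - - b = b - a by ring.
have BA : b - (b - a) = a by ring.
rewrite LE in mJr ivtr closer.
rewrite (JrE (b - a)) BA in ivtr.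
have r1 t : 0 < t <= b - a -> measurable (h' @` `[(- b)%R, (- b + t)%R] : set (borel x0)).
  by case/andP => t0 tL; apply: mJr; rewrite (ltW t0).
have r2 t : 0 < t <= b - a -> (0 < mu (h' @` `[(- b)%R, (- b + t)%R] : set (borel x0)))%E.
  case/andP => t0 tL; rewrite JrE; have at1 : b - t < b by flra.
  have at2 : a <= b - t by flra.
  by have [] := hsub (b - t) b (sub1 _ _ at2 (ltW at1) (lexx b)) at1.
have r4 s t : 0 < s -> s <= t -> t <= b - a ->
    h' @` `[(- b)%R, (- b + s)%R] `<=` h' @` `[(- b)%R, (- b + t)%R].
  by move=> *; exact: monr.
have r5 t u v : 0 < t <= b - a -> (h' @` `[(- b)%R, (- b + t)%R]) u ->
    (h' @` `[(- b)%R, (- b + t)%R]) v ->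
    (`|f u - f v|%:E <= (Cm%:E * mu (h' @` `[(- b)%R, (- b + t)%R] : set (borel x0))) *
       (g u + g v))%E.
  case/andP => t0 tL; rewrite !JrE; apply: Lk; flra.
have CR := chain mu (fun t => h' @` `[(- b)%R, (- b + t)%R]) (b - a) Cm (h' (- b)) f g L0 Cm0 r1 r2.
rewrite (JrE (b - a)) BA in CR.
have {}CR := CR finM r4 ivtr r5 closer g0 mg finI.
rewrite /h' opprK in CR.
have finIf : (\int[mu]_(x in (h @` `[a, b] : set (borel x0))) g x)%E \is a fin_num.
  by rewrite ge0_fin_numE ?integral_ge0.
have finMf : mu (h @` `[a, b] : set (borel x0)) \is a fin_num.
  by rewrite ge0_fin_numE ?measure_ge0.
have mid u v := Lk a b (lexx a) ab (lexx b) u v.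
pose I := fine (\int[mu]_(x in (h @` `[a, b] : set (borel x0))) g x)%E.
pose M := fine (mu (h @` `[a, b] : set (borel x0))).
have IE : (\int[mu]_(x in (h @` `[a, b] : set (borel x0))) g x)%E = I%:E by rewrite fineK.
have ME : mu (h @` `[a, b] : set (borel x0)) = M%:E by rewrite fineK.
rewrite IE -EFinM lee_fin.
apply/ler_addgt0Pr => eps eps0.
have den0 : 0 < 2 * Cm + 2 by rewrite addr_gt0 // mulr_gt0.
set e' := eps / (2 * Cm + 2).
have e'0 : 0 < e' by rewrite divr_gt0.
have he : 2 * (Cm * e') + 2 * e' = eps by rewrite /e'; field; exact: lt0r_neq0.
have [z [zJ gz hz fz]] := CL e' e'0.
have [w [wJ gw hw fw]] := CR e' e'0.
rewrite -/I -/M in hz fz hw fw.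
have := mid z w zJ wJ; rewrite ME gz gw -EFinD -!EFinM lee_fin => md.
have md2 : Cm * M * (fine (g z) + fine (g w)) <= Cm * (4 * I + 2 * e').
  have -> : Cm * M * (fine (g z) + fine (g w)) = Cm * (fine (g z) * M + fine (g w) * M) by ring.
  rewrite ler_wpM2l ?(ltW Cm0) //; apply: le_trans (lerD hz hw) _.
  by rewrite le_eqVlt; apply/orP; left; apply/eqP; ring.
apply: le_trans (ler_distD (f z) _ _) _.
apply: le_trans (lerD (lexx _) (ler_distD (f w) _ _)) _.
rewrite (distrC (f w)).
apply: le_trans (lerD fz (lerD (le_trans md md2) fw)) _.
by rewrite le_eqVlt; apply/orP; left; apply/eqP; rewrite -he; ring.
Qed.
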